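(* Let $G$ be a finite, connected, simple, bridgeless, triangle-free cubic graph, and let $\Lambda$ be a valid labeling of $\mathfrak{L}_2(G)$. Then for every $\gamma\in\Gamma_\Lambda$ the projected walk $W_\gamma$ is a closed walk in $G$, and every edge of $G$ occurs in total exactly twice among the projected walks $W_\gamma$, $\gamma\in\Gamma_\Lambda$.
   Context: $\mathcal{L}(H)$ is the line graph of $H$ (vertices = edges of $H$, adjacent iff sharing an endpoint). Let $\mathcal{T}$ be the set of triangles of $\mathcal{L}(\mathcal{L}(G))$ formed by the three edges of a triangle of $\mathcal{L}(G)$. $\mathfrak{L}_2(G)$ has the vertex set of $\mathcal{L}(\mathcal{L}(G))$ and the edges of $\mathcal{L}(\mathcal{L}(G))$ not lying in any triangle of $\mathcal{T}$. For an edge $e$ of $G$, the reduced clique $\mathbb{X}_e$ is the subgraph of $\mathfrak{L}_2(G)$ on the four edges of $\mathcal{L}(G)$ incident to $e$, with all edges of $\mathfrak{L}_2(G)$ among them (a 4-cycle). A labeling $\Lambda$ gives each edge of $\mathfrak{L}_2(G)$ a label in $\{0,1\}$ ($1$ = open); it is valid if in every reduced clique each vertex is incident to two edges of that clique with different labels. $\Gamma_\Lambda$ is the set of connected components (cycles) of the subgraph formed by the open edges. Projected walk: a vertex $f$ of $\mathfrak{L}_2(G)$ is an edge of $\mathcal{L}(G)$, i.e. an unordered pair of distinct edges of $G$ sharing an endpoint. If $\gamma$ has vertices $f_1,\dots,f_m$ in cyclic order, consecutive $f_j,f_{j+1}$ (indices mod $m$) share exactly one edge $e_j$ of $G$; the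 projected walk $W_\gamma$ is the cyclic sequence $(e_1,\dots,e_m)$ of edges of $G$. *)

(* Defs.v *)
From mathcomp Require Import all_boot.
Set Implicit Arguments. Unset Strict Implicit. Unset Printing Implicit Defensive.

(* A finite simple graph: vertex type T : finType, adjacency g : rel T,
   symmetric and irreflexive.  Edges of G are 2-element sets {u,v} with g u v. *)
Section L2.
Variables (T : finType) (g : rel T).

Definition simple_graph := symmetric g /\ irreflexive g.

Definition cubic := forall v : T, #|[set w | g v w]| = 3.

Definition connected_graph := forall u v : T, connect g u v.

Definition triangle_free := forall u v w : T, ~~ [&& g u v, g v w & g w u].

Definition bridgeless :=
  forall u v : T, g u v ->
    connect (fun x y => g x y && ([set x; y] != [set u; v])) u v.

(* edges of G = vertices of L(G) *)
Definition isE (a : {set T}) : bool :=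
  [exists u, exists v, g u v && (a == [set u; v])].

(* edges of L(G) = vertices of L(L(G)) = vertices of frakL_2(G):
   unordered pairs of distinct edges of G sharing an endpoint *)
Definition isL2v (P : {set {set T}}) : bool :=
  [exists a, exists b,
    [&& isE a, isE b, a != b, a :&: b != set0 & P == [set a; b]]].

Definition LLadj (P Q : {set {set T}}) : bool :=
  [&& isL2v P, isL2v Q, P != Q & P :&: Q != set0].

(* P Q lies in a triangle of the family T: the three edges of a triangle
   {a,b,c} of L(G) *)
Definition inTri (P Q : {set {set T}}) : bool :=
  [exists a, exists b, exists c,
    [&& isE a, isE b, isE c, a != b, a != c, b != c,
        a :&: b != set0, a :&: c != set0, b :&: c != set0,
        P \in [set [set a; b]; [set a; c]; [set b; c]] &
        Q \in [set [set a; b]; [set a; c]; [set b; c]]]].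

Definition L2adj (P Q : {set {set T}}) : bool := LLadj P Q && ~~ inTri P Q.

(* A labeling: label of the edge {P,Q} of frakL_2(G) is lab [set P; Q]
   (true = 1 = open, false = 0). *)
Definition labeling := {set {set {set T}}} -> bool.

Definition valid (lab : labeling) :=
  forall e : {set T}, isE e ->
  forall P, isL2v P -> e \in P ->
  exists Q1 Q2, [/\ isL2v Q1 /\ e \in Q1, isL2v Q2 /\ e \in Q2,
                    L2adj P Q1, L2adj P Q2 &
                    lab [set P; Q1] != lab [set P; Q2]].

Definition openrel (lab : labeling) (P Q : {set {set T}}) : bool :=
  L2adj P Q && lab [set P; Q].

(* c lists, in cyclic order, the vertices of a connected component (a cycle)
   of the subgraph formed by the open edges *)
Definition component_cycle (lab : labeling) (c : seq {set {set T}}) :=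
  [/\ c != [::], uniq c, cycle (openrel lab) c &
      forall P Q, P \in c -> openrel lab P Q -> Q \in c].

Definition shared (P Q : {set {set T}}) : {set T} :=
  odflt set0 [pick e in P :&: Q].

Definition proj_walk (c : seq {set {set T}}) : seq {set T} :=
  [seq shared p.1 p.2 | p <- zip c (rot 1 c)].

Definition closed_walk (w : seq {set T}) :=
  exists vs : seq T, [/\ size vs = size w, cycle g vs &
     w = [seq [set p.1; p.2] | p <- zip vs (rot 1 vs)]].

End L2.

(* Main.v *)
Require Import Defs.
From mathcomp Require Import all_boot.
Set Implicit Arguments. Unset Strict Implicit. Unset Printing Implicit Defensive.

Section Gen.
Variable X : finType.

Lemma set2_two (a b x y : X) : x \in [set a; b] -> y \in [set a; b] -> x != y ->
  [set a; b] = [set x; y].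
Proof.
rewrite !inE => /orP[]/eqP-> /orP[]/eqP->; rewrite ?eqxx // => _.
by rewrite setUC.
Qed.

Lemma set2_in1 (a b : X) : a \in [set a; b]. Proof. by rewrite !inE eqxx. Qed.
Lemma set2_in2 (a b : X) : b \in [set a; b]. Proof. by rewrite !inE eqxx orbT. Qed.

End Gen.

Section Seqs.
Variable X : eqType.

Lemma zip_rot1 (c : seq X) : uniq c -> zip c (rot 1 c) = map (fun x => (x, next c x)) c.
Proof.
case: c => [|y p] // U; rewrite rot1_cons.
apply: (@eq_from_nth _ (y, y)); first by rewrite size_zip size_rcons size_map /= minnn.
rewrite size_zip size_rcons minnn => i Hi.
rewrite (nth_map y) //; rewrite nth_zip; last by rewrite size_rcons.
rewrite next_nth mem_nth // index_uniq //.
rewrite nth_rcons; case: ltngtP => // hi; last by rewrite hi [nth y p _]nth_default.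
by have := Hi; rewrite /= ltnS leqNgt hi.
Qed.

Lemma prev_neq_next (c : seq X) x : uniq c -> 2 < size c -> x \in c -> prev c x != next c x.
Proof.
move=> Uc Sc xc; case: (rot_to xc) => i s' E.
rewrite -(prev_rot i Uc) -(next_rot i Uc) E.
have U' : uniq (x :: s') by rewrite -E rot_uniq.
have S : 2 < size (x :: s') by rewrite -E size_rot.
clear E.
case: s' U' S => [|y [|z r]] // U' _.
rewrite prev_nth next_nth mem_head /= eqxx /=.
move: U'; rewrite /= !inE !negb_or => /andP[/and3P[nxy nxz nxr] /andP[/andP[nyz nyr] _]].
rewrite (eq_sym y x) (negbTE nxy) (eq_sym z x) (negbTE nxz) (memNindex nxr) /=.
have := nth_last x (z :: r); rewrite /= => ->.
apply: contraNneq (_ : y \notin z :: r) => [<-|]; first exact: mem_last.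
by rewrite inE negb_or nyz nyr.
Qed.

Lemma zip_map2 (Y : Type) (f : X -> Y) (s t : seq X) :
  zip (map f s) (map f t) = map (fun p => (f p.1, f p.2)) (zip s t).
Proof. by elim: s t => [|a s IH] [|b t] //=; rewrite IH. Qed.

Lemma count_add_in (s : seq X) (a b d : pred X) :
  {in s, forall x, (a x : nat) = b x + d x} -> count a s = count b s + count d s.
Proof.
elim: s => //= x s IH H; rewrite IH; last by move=> y ys; apply: H; rewrite inE ys orbT.
by rewrite H ?mem_head // addnACA.
Qed.

End Seqs.

Lemma count_as_sum (X : Type) (s : seq X) (a : pred X) : count a s = \sum_(x <- s) (a x : nat).
Proof. by rewrite -sum1_count big_mkcond; apply: eq_bigr => x _; case: (a x). Qed.

Lemma count_sum_uniq (X : finType) (s : seq X) (a : pred X) : uniq s ->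
  count a s = \sum_(x : X) ((x \in s) && a x : nat).
Proof.
move=> U; rewrite -size_filter -(card_uniqP (filter_uniq a U)) -sum1_card big_mkcond.
by apply: eq_bigr => x _; rewrite mem_filter andbC; case: (_ && _).
Qed.


Section Main.
Variables (T : finType) (g : rel T).
Hypothesis gsym : symmetric g.
Hypothesis girr : irreflexive g.

Lemma isEP a : isE g a -> exists u v, g u v /\ a = [set u; v].
Proof. by case/existsP=> u /existsP[v /andP[h /eqP ->]]; exists u, v. Qed.

Lemma isE_mk u v : g u v -> isE g [set u; v].
Proof. by move=> h; apply/existsP; exists u; apply/existsP; exists v; rewrite h eqxx. Qed.

Lemma edge_neq u v : g u v -> u != v.
Proof. by move=> h; apply/eqP=> e; move: h; rewrite e girr. Qed.

Lemma edge_other a x : isE g a -> x \in a -> exists y, g x y /\ a = [set x; y].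
Proof.
case/isEP=> u [v [h ->]]; rewrite !inE => /orP[]/eqP->.
  by exists v.
by exists u; rewrite gsym setUC.
Qed.

Lemma edge_meet a b x y : isE g a -> isE g b -> a != b -> x \in a -> x \in b ->
  y \in a -> y \in b -> x = y.
Proof.
move=> Ea Eb nab xa xb ya yb; apply/eqP; apply/negPn/negP => nxy.
case/isEP: Ea nab xa ya => u [v [_ ->]] nab xa ya.
case/isEP: Eb nab xb yb => u' [v' [_ ->]] nab xb yb.
by move: nab; rewrite (set2_two xa ya nxy) (set2_two xb yb nxy) eqxx.
Qed.


Lemma L2P P : isL2v g P -> exists a b,
  [/\ isE g a, isE g b, a != b, a :&: b != set0 & P = [set a; b]].
Proof.
by case/existsP=> a /existsP[b /and5P[Ea Eb nab iab /eqP ->]]; exists a, b.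
Qed.

Lemma L2_mk e a : isE g e -> isE g a -> a != e -> a :&: e != set0 -> isL2v g [set e; a].
Proof.
move=> Ee Ea ne ie; apply/existsP; exists e; apply/existsP; exists a.
by rewrite Ee Ea eq_sym ne setIC ie eqxx.
Qed.

Lemma L2_pair P a b : isL2v g P -> a \in P -> b \in P -> a != b ->
  [/\ isE g a, isE g b, a :&: b != set0 & P = [set a; b]].
Proof.
case/L2P=> a' [b' [Ea Eb nab iab ->]] ha hb nab'.
rewrite -(set2_two ha hb nab'); split => //.
- by move: ha; rewrite !inE => /orP[]/eqP->.
- by move: hb; rewrite !inE => /orP[]/eqP->.
move: ha hb nab'; rewrite !inE => /orP[]/eqP-> /orP[]/eqP->; rewrite ?eqxx //.
by rewrite setIC.
Qed.

Lemma L2_at P e : isL2v g P -> e \in P -> exists a,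
  [/\ isE g e, isE g a, a != e, a :&: e != set0 & P = [set e; a]].
Proof.
move=> hP he; case/L2P: (hP) => a [b [Ea Eb nab iab DP]].
move: he; rewrite DP !inE => /orP[]/eqP->.
  by exists b; rewrite eq_sym setIC.
by exists a; rewrite setUC.
Qed.

Lemma L2_edge P e : isL2v g P -> e \in P -> isE g e.
Proof. by move=> hP he; case: (L2_at hP he) => a []. Qed.

Lemma sharedC (P Q : {set {set T}}) : shared P Q = shared Q P.
Proof. by rewrite /shared setIC. Qed.

Lemma LL_shared P Q : LLadj g P Q ->
  [/\ shared P Q \in P, shared P Q \in Q &
      forall x, x \in P -> x \in Q -> x = shared P Q].
Proof.
case/and4P=> hP hQ nPQ iPQ.
have [s hs] : exists s, shared P Q = s /\ s \in P :&: Q.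
  rewrite /shared; case: pickP => [s hs|h0]; first by exists s.
  by case/set0Pn: iPQ => x; rewrite h0.
case: hs => -> hs; move: (hs); rewrite inE => /andP[sP sQ]; split => // x xP xQ.
apply/eqP; apply/negPn/negP => nxs.
case/L2P: hP => a [b [_ _ _ _ DP]]; case/L2P: hQ => a' [b' [_ _ _ _ DQ]].
move: nPQ xP sP xQ sQ; rewrite DP DQ => nPQ xP sP xQ sQ.
by move: nPQ; rewrite (set2_two xP sP nxs) (set2_two xQ sQ nxs) eqxx.
Qed.

Lemma LLadjC P Q : LLadj g P Q = LLadj g Q P.
Proof. by rewrite /LLadj andbCA (eq_sym P) setIC. Qed.

Lemma inTriC1 P Q : inTri g P Q -> inTri g Q P.
Proof.
case/existsP=> a /existsP[b /existsP[c /and4P[h1 h2 h3 /and4P[h4 h5 h6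
  /and4P[h7 h8 h9 /andP[h10 h11]]]]]].
apply/existsP; exists a; apply/existsP; exists b; apply/existsP; exists c.
by rewrite h1 h2 h3 h4 h5 h6 h7 h8 h9 h10 h11.
Qed.

Lemma inTriC P Q : inTri g P Q = inTri g Q P.
Proof. by apply/idP/idP; apply: inTriC1. Qed.

Lemma L2adjC P Q : L2adj g P Q = L2adj g Q P.
Proof. by rewrite /L2adj LLadjC inTriC. Qed.

Lemma inTri_mk e a b x : isE g e -> isE g a -> isE g b -> a != e -> b != e ->
  a != b -> x \in e -> x \in a -> x \in b -> inTri g [set e; a] [set e; b].
Proof.
move=> Ee Ea Eb nae nbe nab xe xa xb.
have ne : forall A B : {set T}, x \in A -> x \in B -> A :&: B != set0.
  by move=> A B xA xB; apply/set0Pn; exists x; rewrite inE xA xB.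
apply/existsP; exists e; apply/existsP; exists a; apply/existsP; exists b.
rewrite Ee Ea Eb (eq_sym e a) nae (eq_sym e b) nbe nab !ne //.
by rewrite !inE !eqxx /= orbT.
Qed.


Hypothesis cub : cubic g.

Lemma nbr3 y x z1 z2 z3 : g y x -> g y z1 -> g y z2 -> g y z3 ->
  z1 != x -> z2 != x -> z3 != x -> z1 = z2 \/ z1 = z3 \/ z2 = z3.
Proof.
move=> gx g1 g2 g3 n1 n2 n3.
case: (eqVneq z1 z2) => [|n12]; first by left.
case: (eqVneq z1 z3) => [|n13]; first by right; left.
case: (eqVneq z2 z3) => [|n23]; first by right; right.
have U : uniq [:: x; z1; z2; z3].
  by rewrite /= !inE !negb_or !(eq_sym x) n1 n2 n3 n12 n13 n23.
have : #|[:: x; z1; z2; z3]| <= #|[set w | g y w]|.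
  apply/subset_leq_card/subsetP => w; rewrite !inE.
  by case/or4P => /eqP ->.
by rewrite cub (card_uniqP U).
Qed.

Lemma three_nbrs P e Q1 Q2 Q3 : isL2v g P -> e \in P ->
  L2adj g P Q1 -> L2adj g P Q2 -> L2adj g P Q3 ->
  e \in Q1 -> e \in Q2 -> e \in Q3 -> Q1 = Q2 \/ Q1 = Q3 \/ Q2 = Q3.
Proof.
move=> hP he A1 A2 A3 e1 e2 e3.
case: (L2_at hP he) => a [Ee Ea nae iae DP].
case/set0Pn: iae => x; rewrite inE => /andP[xa xe].
case: (edge_other Ee xe) => y [gxy De].
have key : forall Q, L2adj g P Q -> e \in Q ->
    exists z, [/\ g y z, z != x & Q = [set e; [set y; z]]].
  move=> Q hA eQ; case/andP: (hA) => /and4P[_ hQ nPQ _] nT.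
  case: (L2_at hQ eQ) => b [_ Eb nbe ibe DQ].
  have nab : a != b by apply: contraNneq nPQ => ab; rewrite DP DQ ab.
  have xb : x \notin b.
    by apply/negP => xb; move: nT; rewrite DP DQ (inTri_mk Ee Ea Eb nae nbe nab xe xa xb).
  case/set0Pn: ibe => t; rewrite inE => /andP[tb te].
  have ty : t = y.
    move: te; rewrite De !inE => /orP[]/eqP // tx.
    by move: xb; rewrite -tx tb.
  case: (edge_other Eb tb) => z [gtz Db]; rewrite ty in gtz Db.
  exists z; split => //; last by rewrite DQ Db.
  by apply: contraNneq xb => zx; rewrite Db zx !inE eqxx orbT.
case: (key _ A1 e1) => z1 [g1 n1 D1].
case: (key _ A2 e2) => z2 [g2 n2 D2].
case: (key _ A3 e3) => z3 [g3 n3 D3].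
have gyx : g y x by rewrite gsym.
rewrite D1 D2 D3.
by case: (nbr3 gyx g1 g2 g3 n1 n2 n3) => [|[]] ->; [left|right;left|right;right].
Qed.


Variable lab : labeling T.
Hypothesis hval : valid g lab.
Local Notation O := (openrel g lab).

Lemma O_sym P Q : O P Q = O Q P.
Proof. by rewrite /openrel L2adjC setUC. Qed.

Lemma O_props P Q : O P Q -> [/\ isL2v g P, isL2v g Q, P != Q & L2adj g P Q].
Proof. by case/andP=> /[dup] hA /andP[/and4P[]]. Qed.

Lemma deg_ex P e : isL2v g P -> e \in P -> exists Q, O P Q /\ e \in Q.
Proof.
move=> hP he; have Ee := L2_edge hP he.
case: (hval Ee hP he) => R1 [R2 [[_ e1] [_ e2] A1 A2 nl]].
case h1: (lab [set P; R1]).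
  by exists R1; rewrite /openrel A1 h1.
have h2 : lab [set P; R2] by move: nl; rewrite h1; case: (lab _).
by exists R2; rewrite /openrel A2 h2.
Qed.

Lemma deg1 P e Q1 Q2 : isL2v g P -> e \in P -> O P Q1 -> O P Q2 ->
  e \in Q1 -> e \in Q2 -> Q1 = Q2.
Proof.
move=> hP he /andP[B1 l1] /andP[B2 l2] f1 f2; have Ee := L2_edge hP he.
case: (hval Ee hP he) => R1 [R2 [[_ e1] [_ e2] A1 A2 nl]].
have nR : R1 <> R2 by move=> E; move: nl; rewrite E eqxx.
have inR : forall Q, L2adj g P Q -> e \in Q -> Q = R1 \/ Q = R2.
  move=> Q hQ eQ; case: (three_nbrs hP he hQ A1 A2 eQ e1 e2) => [|[]]; auto.
  by move=> E; case: nR.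
case: (inR _ B1 f1) => E1; case: (inR _ B2 f2) => E2; subst => //.
  by move: nl; rewrite l1 l2.
by move: nl; rewrite l1 l2.
Qed.

Lemma nonstar P Q a e b x : L2adj g P Q -> P = [set a; e] -> Q = [set e; b] ->
  isE g a -> isE g e -> isE g b -> a != e -> b != e -> a != b ->
  x \in a -> x \in e -> x \in b -> False.
Proof.
move=> /andP[_ nT] DP DQ Ea Ee Eb nae nbe nab xa xe xb.
by move: nT; rewrite DP DQ setUC (inTri_mk Ee Ea Eb nae nbe nab xe xa xb).
Qed.


Lemma comp_size c : component_cycle g lab c -> 2 < size c.
Proof.
case: c => [|x [|y [|z r]]] [] // _ U cyc cl.
  by move: cyc => /= /andP[/O_props[_ _ /eqP]].
move: cyc => /= /and3P[oxy oyx _].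
case: (O_props oxy) => hx hy nxy /andP[hL _].
case: (LL_shared hL) => sx sy su.
case: (L2_at hx sx) => a [_ Ea nas ias Dx].
have ax : a \in x by rewrite Dx !inE eqxx orbT.
case: (deg_ex hx ax) => Q [oQ aQ].
have : Q \in [:: x; y] by apply: cl oQ; rewrite mem_head.
rewrite !inE => /orP[]/eqP EQ; subst Q.
  by case: (O_props oQ) => _ _ /eqP.
by move: nas; rewrite (su a ax aQ) eqxx.
Qed.

Lemma comp_next c x : component_cycle g lab c -> x \in c -> O x (next c x).
Proof. by case=> _ _ cyc _ xc; apply: next_cycle. Qed.

Lemma comp_prev c x : component_cycle g lab c -> x \in c -> O (prev c x) x.
Proof. by case=> _ _ cyc _ xc; apply: prev_cycle. Qed.

Lemma comp_local c x : component_cycle g lab c -> x \in c ->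
  shared (prev c x) x != shared x (next c x) /\
  x = [set shared (prev c x) x; shared x (next c x)].
Proof.
move=> hc xc; have U : uniq c by case: hc.
have op := comp_prev hc xc; have on := comp_next hc xc.
have npn := prev_neq_next U (comp_size hc) xc.
case: (O_props op) => hp hx _ /andP[Lp _].
case: (O_props on) => _ hy _ /andP[Ln _].
case: (LL_shared Lp) => s0p s0x _; case: (LL_shared Ln) => s1x s1y _.
have ns : shared (prev c x) x != shared x (next c x).
  apply/negP => /eqP E; move/negP: npn; apply; apply/eqP.
  apply: (deg1 hx s1x _ on) => //; first by rewrite O_sym.
  by rewrite -E.
by split => //; case: (L2_pair hx s0x s1x ns).
Qed.


Definition common (x0 : T) (a b : {set T}) := odflt x0 [pick t in a :&: b].

Lemma common_in x0 a b : a :&: b != set0 -> common x0 a b \in a /\ common x0 a b \in b.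
Proof.
rewrite /common; case: pickP => [t|h0] /=.
  by rewrite inE => /andP[].
by case/set0Pn => t; rewrite h0.
Qed.

Lemma comp_walk x0 c x : component_cycle g lab c -> x \in c ->
  let h := fun P => common x0 (shared (prev c P) P) (shared P (next c P)) in
  g (h x) (h (next c x)) /\ shared x (next c x) = [set h x; h (next c x)].
Proof.
move=> hc xc h; have U : uniq c by case: hc.
have yc : next c x \in c by rewrite mem_next.
rewrite /h (prev_next U).
case: (comp_local hc xc) => n01 Dx.
case: (comp_local hc yc); rewrite (prev_next U) => n12 Dy.
set s0 := shared (prev c x) x in n01 Dx *.
set s1 := shared x (next c x) in n01 Dx n12 Dy *.
set s2 := shared (next c x) (next c (next c x)) in n12 Dy *.
have on := comp_next hc xc.
case: (O_props on) => hx hy nxy Lxy.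
have s0x : s0 \in x by rewrite Dx set2_in1.
have s1x : s1 \in x by rewrite Dx set2_in2.
have s1y : s1 \in next c x by rewrite Dy set2_in1.
have s2y : s2 \in next c x by rewrite Dy set2_in2.
case: (L2_pair hx s0x s1x n01) => E0 E1 i01 _.
case: (L2_pair hy s1y s2y n12) => _ E2 i12 _.
case: (common_in x0 i01) => c0 c1.
case: (common_in x0 i12) => d1 d2.
set u := common x0 s0 s1 in c0 c1 *.
set v := common x0 s1 s2 in d1 d2 *.
have nuv : u != v.
  apply/negP => /eqP E; rewrite -E in d2.
  have n02 : s0 != s2.
    apply/negP => /eqP e02; move/negP: nxy; apply; apply/eqP.
    by rewrite Dy {1}Dx e02 setUC.
  by apply: (nonstar Lxy Dx Dy E0 E1 E2 n01 _ n02 c0 c1 d2); rewrite eq_sym.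
case: (edge_other E1 c1) => w [guw Ds1].
have vw : v = w.
  by move: d1; rewrite Ds1 !inE => /orP[]/eqP // E; move: nuv; rewrite E eqxx.
by rewrite -vw in guw Ds1.
Qed.


Lemma part1 c : component_cycle g lab c -> closed_walk g (proj_walk c).
Proof.
move=> hc; have U : uniq c by case: hc.
have [x0 _] : exists x0 : T, True.
  case E: c => [|P c']; first by move: hc; rewrite E; case; rewrite eqxx.
  have Pc : P \in c by rewrite E mem_head.
  case: (O_props (comp_next hc Pc)) => hP _ _ _.
  case: (L2P hP) => a [b [Ea _ _ _ _]]; case: (isEP Ea) => u _; by exists u.
pose h := fun P => common x0 (shared (prev c P) P) (shared P (next c P)).
exists (map h c); split.
- by rewrite size_map /proj_walk size_map size_zip size_rot minnn.
- rewrite cycle_map; apply: (cycle_from_next U) => x xc.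
  exact: (comp_walk x0 hc xc).1.
rewrite /proj_walk zip_rot1 // -map_rot zip_map2 -!map_comp.
rewrite zip_rot1 // -map_comp.
apply/eq_in_map => x xc /=; exact: (comp_walk x0 hc xc).2.
Qed.


Lemma set2_eq_l (e a b : {set T}) : a != e -> [set e; a] = [set e; b] -> a = b.
Proof.
move=> nae E; have : a \in [set e; b] by rewrite -E set2_in2.
by rewrite !inE (negbTE nae) => /eqP.
Qed.

Lemma pair_neq_edge (t w u v : T) : w != u -> w != v -> [set t; w] != [set u; v].
Proof.
move=> nu nv; apply/negP => /eqP E.
have : w \in [set u; v] by rewrite -E set2_in2.
by rewrite !inE (negbTE nu) (negbTE nv).
Qed.

Lemma Ve_card e : isE g e -> #|[set P | isL2v g P && (e \in P)]| = 4.
Proof.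
move=> Ee; case: (isEP Ee) => u [v [guv De]].
have nuv := edge_neq guv.
pose N t := [set w | g t w].
pose F t w := [set e; [set t; w]].
have cN : forall t s, g t s -> #|N t :\ s| = 2.
  move=> t s gts; have := cardsD1 s (N t); rewrite cub inE gts.
  by move=> [] ->.
have Fin : forall t s w, e = [set t; s] -> g t s -> w \in N t :\ s ->
    [set t; w] != e /\ isE g [set t; w].
  move=> t s w Ets gts; rewrite !inE => /andP[nws gtw]; split; last exact: isE_mk.
  rewrite Ets; case: (eqVneq t s) => [ts|nts]; first by move: gts; rewrite ts girr.
  have nwt : w != t by rewrite eq_sym; apply: edge_neq.
  exact: pair_neq_edge.
have Finj : forall t s, e = [set t; s] -> g t s -> {in N t :\ s &, injective (F t)}.
  move=> t s Ets gts w w' hw hw' E.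
  have [ne _] := Fin _ _ _ Ets gts hw.
  have := set2_eq_l ne E => E2.
  have : w \in [set t; w'] by rewrite -E2 set2_in2.
  move: hw; rewrite !inE => /andP[_ gtw] /orP[]/eqP // wt.
  by move: gtw; rewrite wt girr.
have Ev : e = [set v; u] by rewrite De setUC.
have gvu : g v u by rewrite gsym.
have -> : [set P | isL2v g P && (e \in P)] = F u @: (N u :\ v) :|: F v @: (N v :\ u).
  apply/setP => P; rewrite !inE; apply/idP/idP.
    case/andP=> hP eP; case: (L2_at hP eP) => a [_ Ea nae iae DP].
    case/set0Pn: iae => t; rewrite inE => /andP[ta te].
    case: (edge_other Ea ta) => w [gtw Da].
    move: te; rewrite De !inE => /orP[]/eqP tE; subst t.
      apply/orP; left; apply/imsetP; exists w; last by rewrite DP Da.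
      rewrite !inE gtw andbT; apply: contraNneq nae => wv; by rewrite Da wv De.
    apply/orP; right; apply/imsetP; exists w; last by rewrite DP Da.
    rewrite !inE gtw andbT; apply: contraNneq nae => wu; by rewrite Da wu Ev.
  case/orP => /imsetP[w hw ->].
    have [ne Ea] := Fin _ _ _ De guv hw.
    rewrite /F set2_in1 andbT; apply: L2_mk => //.
    by apply/set0Pn; exists u; rewrite De !inE !eqxx.
  have [ne Ea] := Fin _ _ _ Ev gvu hw.
  rewrite /F set2_in1 andbT; apply: L2_mk => //.
  by apply/set0Pn; exists v; rewrite De !inE !eqxx ?orbT.
rewrite cardsU.
have -> : F u @: (N u :\ v) :&: F v @: (N v :\ u) = set0.
  apply/setP => P; rewrite !inE; apply/negP => /andP[/imsetP[w hw ->] /imsetP[z hz E]].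
  have [ne _] := Fin _ _ _ De guv hw.
  have E2 := set2_eq_l ne E.
  have : u \in [set v; z] by rewrite -E2 set2_in1.
  move: hz; rewrite !inE (negbTE nuv) /= => /andP[nzu _] /eqP uz.
  by move: nzu; rewrite uz eqxx.
rewrite cards0 subn0 !card_in_imset; first by rewrite (cN _ _ guv) (cN _ _ gvu).
  exact: (Finj _ _ Ev gvu).
exact: (Finj _ _ De guv).
Qed.


Lemma comp_count c (e : {set T}) : component_cycle g lab c ->
  count (fun P : {set {set T}} => e \in P) c = 2 * count (pred1 e) (proj_walk c).
Proof.
move=> hc; have U : uniq c by case: hc.
rewrite /proj_walk zip_rot1 // -map_comp count_map.
rewrite [LHS](@count_add_in _ _ _ (fun x => shared (prev c x) x == e)
                               (fun x => shared x (next c x) == e)).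
  have -> : count (fun x => shared (prev c x) x == e) c =
            count (fun x => shared x (next c x) == e) c.
    have -> : count (fun x => shared (prev c x) x == e) c =
              count (fun x => shared x (next c x) == e) (map (prev c) c).
      rewrite count_map; apply: eq_in_count => x xc /=; by rewrite next_prev.
    apply/permP; apply: uniq_perm => //.
      by rewrite map_inj_uniq //; apply: (can_inj (next_prev U)).
    move=> x; apply/mapP/idP => [[y yc ->]|xc]; first by rewrite mem_prev.
    by exists (next c x); rewrite ?mem_next ?prev_next.
  by rewrite mul2n -addnn; congr (_ + _); apply: eq_count => x; rewrite /= eq_sym.
move=> x xc; case: (comp_local hc xc) => ns Dx /=.
rewrite [in LHS]Dx !inE (eq_sym e) (eq_sym e).
case: (eqVneq (shared (prev c x) x) e) => [E|] /=.
  by rewrite E in ns; rewrite eq_sym (negbTE ns).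
by move=> _; case: (_ == e).
Qed.


Lemma part2 (cs : seq (seq {set {set T}})) :
  (forall c, c \in cs -> component_cycle g lab c) ->
  (forall P, (exists Q, openrel g lab P Q) -> count (fun c => P \in c) cs = 1) ->
  forall e, isE g e -> \sum_(c <- cs) count (pred1 e) (proj_walk c) = 2.
Proof.
move=> hcs hcnt e Ee.
suff : 2 * \sum_(c <- cs) count (pred1 e) (proj_walk c) = 2 * 2.
  by move/eqP; rewrite eqn_mul2l /= => /eqP.
rewrite big_distrr /=.
rewrite (eq_big_seq (fun c : seq {set {set T}} => \sum_(x : {set {set T}}) ((x \in c) && (e \in x) : nat))); last first.
  move=> c cin; have hc := hcs c cin; have U : uniq c by case: hc.
  by rewrite -(comp_count e hc) (count_sum_uniq _ U).
rewrite exchange_big /=.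
rewrite (eq_bigr (fun x => (isL2v g x && (e \in x) : nat))); last first.
  move=> x _; case ex: (e \in x); last by rewrite andbF big1 // => c _; rewrite andbF.
  rewrite andbT.
  under eq_bigr do rewrite andbT.
  rewrite -count_as_sum.
  case hx: (isL2v g x).
    by case: (deg_ex hx ex) => Q [oQ _]; apply: hcnt; exists Q.
  rewrite (eq_in_count (a2 := pred0)) ?count_pred0 // => c cin /=.
  apply/negP => xc; have := O_props (comp_next (hcs c cin) xc).
  by rewrite hx => [[]].
rewrite (_ : 2 * 2 = 4) // -(Ve_card Ee) -sum1_card big_mkcond /=.
rewrite [RHS]big_mkcond; apply: eq_bigr => x _; rewrite inE; by case: (_ && _).
Qed.

End Main.


Theorem lemma2p9 (T : finType) (g : rel T) (lab : labeling T) :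
  simple_graph g -> connected_graph g -> bridgeless g ->
  triangle_free g -> cubic g -> valid g lab ->
  (forall c, component_cycle g lab c -> closed_walk g (proj_walk c)) /\
  (forall cs : seq (seq {set {set T}}),
     (forall c, c \in cs -> component_cycle g lab c) ->
     (forall P, (exists Q, openrel g lab P Q) -> count (fun c => P \in c) cs = 1) ->
     forall e, isE g e ->
       \sum_(c <- cs) count (pred1 e) (proj_walk c) = 2).
Proof.
move=> [gsym girr] _ _ _ cub hval; split.
  by move=> c hc; apply: (part1 gsym cub hval hc).
by move=> cs hcs hcnt e Ee; apply: (part2 gsym girr cub hval hcs hcnt Ee).
Qed.
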